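(* Let $\mathcal{F}\subseteq\mathcal{P}(\omega)$ be a free filter and let $D,E\subseteq(-1,1)^\omega$ be countable sets. Then there exists a homeomorphism $h\colon Q\to Q$ of $Q=[-1,1]^\omega$ such that $h[C_\mathcal{F}]=C_\mathcal{F}$, $h[(-1,1)^\omega]=(-1,1)^\omega$, and for all $d\in D$, $e\in E$ and $n\in\omega$, $h(d)(n)\ne e(n)$.
   Context: A filter on $\omega$ is free if it contains all cofinite sets. $Q=[-1,1]^\omega$ has the product topology and $Q^\circ=(-1,1)^\omega$. $K_\mathcal{F}=\{f\in Q:\forall m\in\omega\ \{n\in\omega:|f(n)|<2^{-m}\}\in\mathcal{F}\}$ and $C_\mathcal{F}=K_\mathcal{F}\cap Q^\circ$. *)

(* Defs.v *)
From mathcomp Require Import all_boot all_order all_algebra.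
From mathcomp Require Import all_classical all_reals all_analysis.
Unset Printing Implicit Defensive.
Import Order.TTheory GRing.Theory Num.Theory numFieldNormedType.Exports.
Local Open Scope classical_set_scope.
Local Open Scope ring_scope.

Definition is_filter (F : set (set nat)) : Prop :=
  [/\ F setT, ~ F set0,
      (forall A B, F A -> A `<=` B -> F B) &
      (forall A B, F A -> F B -> F (A `&` B))].

Definition is_free_filter (F : set (set nat)) : Prop :=
  is_filter F /\ (forall A : set nat, finite_set (~` A) -> F A).

(* The space R^omega with the product topology. *)
Notation Rw R := ({ptws nat -> R}) (only parsing).

Definition Qcube (R : realType) : set (Rw R) :=
  [set f | forall n, -1 <= f n <= 1].
Definition Qopen (R : realType) : set (Rw R) :=
  [set f | forall n, -1 < f n < 1].

Definition KF (R : realType) (F : set (set nat)) : set (Rw R) :=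
  [set f | Qcube R f /\
           forall m : nat, F [set n | `|f n| < (2 ^- m : R)]].
Definition CF (R : realType) (F : set (set nat)) : set (Rw R) :=
  KF R F `&` Qopen R.

Definition homeomorphism_on {T : topologicalType} (A : set T) (h : T -> T) :=
  [/\ {within A, continuous h}, (forall x, A x -> A (h x)) &
      exists g : T -> T,
        [/\ {within A, continuous g}, (forall x, A x -> A (g x)),
            (forall x, A x -> g (h x) = x) & (forall x, A x -> h (g x) = x)]].

(* Main.v *)
Require Import Defs.
From mathcomp Require Import all_boot all_order all_algebra.
From mathcomp Require Import all_classical all_reals all_analysis.
From mathcomp Require Import ring lra.
Import Order.TTheory GRing.Theory Num.Theory numFieldNormedType.Exports.
Local Open Scope classical_set_scope.
Local Open Scope ring_scope.

Section S.
Variable R : realType.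

Definition phi (t x : R) := x + t * (1 - `|x|).
Definition psi (t y : R) := ((y - t) + t * `|y - t|) / (1 - t^+2).

Lemma phi_cont t : continuous (phi t).
Proof.
move=> x; rewrite /phi.
apply: cvgD; first exact: cvg_id.
apply: cvgM; first exact: cvg_cst.
apply: cvgB; first exact: cvg_cst.
exact: cvg_norm.
Qed.

Lemma psi_cont t : continuous (psi t).
Proof.
move=> x; rewrite /psi.
apply: cvgM; last exact: cvg_cst.
apply: cvgD; first by apply: cvgB; [exact: cvg_id| exact: cvg_cst].
apply: cvgM; first exact: cvg_cst.
apply: cvg_norm. by apply: cvgB; [exact: cvg_id| exact: cvg_cst].
Qed.

Lemma psiK t x : 0 <= t < 1 -> psi t (phi t x) = x.
Proof.
move=> /andP[t0 t1]; rewrite /psi /phi.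
have h : 1 - t^+2 != 0 by rewrite subr_eq0 eq_sym; apply/negP=> /eqP h; nra.
case: (leP 0 x) => x0.
  rewrite (ger0_norm x0).
  have -> : x + t * (1 - x) - t = x * (1 - t) by ring.
  rewrite ger0_norm; last by nra.
  by field.
rewrite (ltr0_norm x0).
have -> : x + t * (1 - - x) - t = x * (1 + t) by ring.
rewrite ler0_norm; last by nra.
by field.
Qed.

Lemma phiK t y : 0 <= t < 1 -> phi t (psi t y) = y.
Proof.
move=> /andP[t0 t1]; rewrite /psi /phi.
have h : 1 - t^+2 != 0 by rewrite subr_eq0 eq_sym; apply/negP=> /eqP h; nra.
have h1 : 1 - t != 0 by apply/negP=> /eqP h'; lra.
have h2 : 1 + t != 0 by apply/negP=> /eqP h'; lra.
case: (leP t y) => yt.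
  rewrite (@ger0_norm _ (y - t)); last by lra.
  have -> : (y - t + t * (y - t)) / (1 - t ^+ 2) = (y - t) / (1 - t).
    by field; rewrite ?h1 ?h2.
  rewrite ger0_norm; last by apply: divr_ge0; lra.
  by field.
rewrite (@ltr0_norm _ (y - t)); last by lra.
have -> : (y - t + t * - (y - t)) / (1 - t ^+ 2) = (y - t) / (1 + t).
  by field; rewrite ?h1 ?h2.
rewrite ltr0_norm; last by rewrite pmulr_llt0 ?invr_gt0; lra.
by field.
Qed.

Lemma avoid_countable (B : set R) (a : R) : 0 < a -> countable B ->
  exists t, 0 < t < a /\ ~ B t.
Proof.
move=> a0 cB; apply: contrapT => hn.
have sub : (`]0, a[ : set R) `<=` B.
  move=> t /=; rewrite in_itv /= => ht; apply: contrapT => nB; apply: hn.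
  by exists t.
have c : countable (`]0, a[ : set R) by apply: sub_countable cB; exact: subset_card_le.
have := countable_lebesgue_measure0 c.
rewrite lebesgue_measure_itv /= lte_fin a0 /=.
move/eqP; rewrite -EFinB eqe subr0 => /eqP a00.
by move: a0; rewrite a00 ltxx.
Qed.

Lemma proj_cvg (x : Rw R) n : (fun g : Rw R => g n) @ x --> x n.
Proof.
pose P := @pointwise_cvgP nat R (nbhs x) x.
have F : Filter (nbhs x) by exact: nbhs_filter.
have C : (nbhs x) --> x by [].
exact: (P F).1 C n.
Qed.

Lemma cont_coord (k : nat -> R -> R) : (forall n, continuous (k n)) ->
  continuous (fun f : Rw R => ((fun n => k n (f n)) : Rw R)).
Proof.
move=> hk x.
set h := (fun f : Rw R => ((fun n => k n (f n)) : Rw R)).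
pose P := @pointwise_cvgP nat R (h @ nbhs x) (h x).
have F : Filter (h @ nbhs x) by apply: fmap_filter; exact: nbhs_filter.
apply: (P F).2 => n.
have := @cvg_comp _ _ _ (fun g : Rw R => g n) (k n) (nbhs x) _ _ (proj_cvg x n) (hk n (x n)).
by [].
Qed.

Lemma phi_cube t x : 0 <= t < 1 -> -1 <= x <= 1 -> -1 <= phi t x <= 1.
Proof.
move=> /andP[t0 t1] /andP[x0 x1]; rewrite /phi.
case: (leP 0 x) => xs; [rewrite ger0_norm // | rewrite ltr0_norm //];
  apply/andP; split; nra.
Qed.

Lemma phi_open t x : 0 <= t < 1 -> -1 < x < 1 -> -1 < phi t x < 1.
Proof.
move=> /andP[t0 t1] /andP[x0 x1]; rewrite /phi.
case: (leP 0 x) => xs; [rewrite ger0_norm // | rewrite ltr0_norm //];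
  apply/andP; split; nra.
Qed.

Lemma psi_cube t y : 0 <= t < 1 -> -1 <= y <= 1 -> -1 <= psi t y <= 1.
Proof.
move=> ht /andP[y0 y1]; have := phiK t y ht; move: ht => /andP[t0 t1].
set x := psi t y; rewrite /phi => hy.
case: (leP 0 x) => xs; [rewrite ger0_norm // in hy | rewrite ltr0_norm // in hy];
  apply/andP; split; nra.
Qed.

Lemma psi_open t y : 0 <= t < 1 -> -1 < y < 1 -> -1 < psi t y < 1.
Proof.
move=> ht /andP[y0 y1]; have := phiK t y ht; move: ht => /andP[t0 t1].
set x := psi t y; rewrite /phi => hy.
case: (leP 0 x) => xs; [rewrite ger0_norm // in hy | rewrite ltr0_norm // in hy];
  apply/andP; split; nra.
Qed.

Lemma phi_close t x : 0 <= t < 1 -> -1 <= x <= 1 -> `|phi t x - x| <= t.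
Proof.
move=> /andP[t0 t1] /andP[x0 x1]; rewrite /phi.
have -> : x + t * (1 - `|x|) - x = t * (1 - `|x|) by ring.
have hx : `|x| <= 1 by rewrite ler_norml x0 x1.
have nx : 0 <= `|x| by [].
rewrite ger0_norm; nra.
Qed.

Lemma psi_close t y : 0 <= t < 1 -> -1 <= y <= 1 -> `|psi t y - y| <= t.
Proof.
move=> ht hy; have hx := psi_cube t y ht hy.
have := phi_close t _ ht hx; by rewrite phiK // distrC.
Qed.

Definition w (n : nat) : R := (2^-1) ^+ n.+1.

Lemma w_le1 n : w n <= 1.
Proof. by rewrite /w; apply: exprn_ile1; rewrite ?invr_ge0 ?invf_le1 ?ler0n ?ler1n. Qed.

Lemma normD_sub (a b : R) : `|a| <= `|b| + `|a - b|.
Proof. by have := ler_normD (a - b) b; rewrite subrK addrC. Qed.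

Lemma KF_pres F (t : nat -> R) (k : Rw R -> Rw R) : is_free_filter F ->
  (forall n, t n < w n) -> (forall f, Qcube R f -> Qcube R (k f)) ->
  (forall f n, Qcube R f -> `|k f n - f n| <= t n) ->
  forall f, KF R F f -> KF R F (k f).
Proof.
move=> [[FT F0 FS FI] Fcof] ht hQ hc f [Qf Ff]; split; first exact: hQ.
move=> m.
have A := Ff m.+1.
have Cof : F [set n | (m <= n)%N].
  apply: Fcof; apply: sub_finite_set (finite_II m) => n /= /negP.
  by rewrite -ltnNge.
apply: FS (FI _ _ A Cof) _ => n /= [hn mn].
have h1 := hc f n Qf.
have h2 := normD_sub (k f n) (f n).
have u0 : (0 : R) <= 2^-1 by rewrite invr_ge0.
have u1 : (2^-1 : R) <= 1 by rewrite invf_le1 ?ler1n.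
have h3 : w n <= w m by rewrite /w; apply: ler_wiXn2l.
have h4 := ht n.
have e1 : (2 ^- m.+1 : R) = w m by rewrite /w exprVn.
have e2 : (2 ^- m : R) = 2 * w m.
  rewrite /w -exprVn exprS mulrA divff ?mul1r //.
rewrite e1 in hn; rewrite e2; lra.
Qed.

End S.

Theorem mainTheorem13 (R : realType) (F : set (set nat))
  (D E : set (Rw R)) :
  is_free_filter F ->
  countable D -> countable E ->
  D `<=` Qopen R -> E `<=` Qopen R ->
  exists h : Rw R -> Rw R,
    [/\ homeomorphism_on (Qcube R) h,
        h @` CF R F = CF R F,
        h @` Qopen R = Qopen R &
        forall d e (n : nat), D d -> E e -> h d n <> e n].
Proof.
move=> hF cD cE DQ EQ.
pose B n := (fun p : Rw R * Rw R => (p.2 n - p.1 n) / (1 - `|p.1 n|)) @` (D `*` E).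
have cB n : countable (B n).
  by apply: sub_countable (card_image_le _ _) (countableX cD cE).
have : forall n, exists s : R, (0 < s < w R n) /\ ~ B n s.
  move=> n; apply: avoid_countable => //.
  by rewrite /w exprn_gt0 // invr_gt0.
case/choice => t ht.
have twn n : t n < w R n by have [/andP[_ ->] _] := ht n.
have t01 n : 0 <= t n < 1.
  have [/andP[a b] _] := ht n; have := w_le1 R n => c.
  by apply/andP; split; [exact: ltW | exact: lt_le_trans c].
pose h := fun f : Rw R => ((fun n => phi R (t n) (f n)) : Rw R).
pose g := fun f : Rw R => ((fun n => psi R (t n) (f n)) : Rw R).
have hg f : h (g f) = f by apply/funext => n; rewrite /h /g phiK.
have gh f : g (h f) = f by apply/funext => n; rewrite /h /g psiK.
have hQ f : Qcube R f -> Qcube R (h f) by move=> Qf n; exact: phi_cube.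
have gQ f : Qcube R f -> Qcube R (g f) by move=> Qf n; exact: psi_cube.
have hO f : Qopen R f -> Qopen R (h f) by move=> Qf n; exact: phi_open.
have gO f : Qopen R f -> Qopen R (g f) by move=> Qf n; exact: psi_open.
have hK : forall f, KF R F f -> KF R F (h f).
  apply: (@KF_pres R F t h hF twn hQ) => f n Qf; exact: phi_close.
have gK : forall f, KF R F f -> KF R F (g f).
  apply: (@KF_pres R F t g hF twn gQ) => f n Qf; exact: psi_close.
have hC f : CF R F f -> CF R F (h f) by move=> [Kf Of]; split; [exact: hK | exact: hO].
have gC f : CF R F f -> CF R F (g f) by move=> [Kf Of]; split; [exact: gK | exact: gO].
exists h; split.
- split.
  + apply: continuous_subspaceT.
    exact: (cont_coord R (fun n => phi R (t n)) (fun n => phi_cont R (t n))).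
  + exact: hQ.
  + exists g; split => //.
    apply: continuous_subspaceT.
    exact: (cont_coord R (fun n => psi R (t n)) (fun n => psi_cont R (t n))).
- apply/seteqP; split => [y [x Cx <-]|y Cy]; first exact: hC.
  by exists (g y); [exact: gC | exact: hg].
- apply/seteqP; split => [y [x Cx <-]|y Cy]; first exact: hO.
  by exists (g y); [exact: gO | exact: hg].
- move=> d e n Dd Ee heq; apply: (ht n).2.
  exists (d, e) => //=.
  rewrite -heq /h /phi.
  have /andP[d0 d1] := DQ d Dd n.
  have hd : `|d n| < 1 by rewrite ltr_norml d0 d1.
  have hd' : 1 - `|d n| != 0 by apply/negP => /eqP hh; lra.
  by field.
Qed.
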